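(* Let $G$ be a finite abelian group and let $N$ be a multiple of the exponent $\lambda(G)$ of $G$. Let $p_1,\ldots,p_k$ be distinct primes dividing $N$, and let $G_{p_i}$ be the Sylow $p_i$-subgroup of $G$. Fix $\epsilon>0$. (i) Given a generating set $S$ for $G$, one can compute generating sets $S_1,\ldots,S_k$ for $G_{p_1},\ldots,G_{p_k}$, each of size $|S|$, using $O(|S|\lg^{1+\epsilon}N)$ group operations. (ii) Given a uniformly distributed random $\beta\in G$, one can compute elements $\beta_1,\ldots,\beta_k$ uniformly distributed over $G_{p_1},\ldots,G_{p_k}$ respectively, using $O(\lg^{1+\epsilon}N)$ group operations.
   Context: Computations are generic: the group is accessed only through a black box performing multiplication and inversion and providing the identity, with cost measured in group operations. $\lg=\log_2$. The exponent $\lambda(G)$ is the least positive integer $n$ with $\alpha^n=1$ for all $\alpha\in G$. *)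

(* Defs.v *)
From mathcomp Require Import all_boot all_fingroup all_solvable.
From Stdlib Require Import Reals.
Set Implicit Arguments. Unset Strict Implicit. Unset Printing Implicit Defensive.

(* Generic (black-box) group computations, modelled as straight-line programs. Cost = number of instructions. *)
Inductive instr : Type :=
| IMul of nat & nat
| IInv of nat
| IOne.

Section SLP.
Local Open Scope group_scope.
Variable gT : finGroupType.

Definition exec (mem : seq gT) (c : instr) : gT :=
  match c with
  | IMul i j => nth 1 mem i * nth 1 mem j
  | IInv i => (nth 1 mem i)^-1
  | IOne => 1
  end.

Fixpoint run (mem : seq gT) (p : seq instr) : seq gT :=
  match p with
  | [::] => mem
  | c :: p' => run (rcons mem (exec mem c)) p'
  end.

Definition slp_out (p : seq instr) (ins : seq gT) (outs : seq nat) : seq gT :=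
  [seq nth 1 (run ins p) i | i <- outs].
End SLP.

Definition lg (N : nat) : R := (ln (INR N) / ln 2)%R.
Definition lg_pow (N : nat) (a : R) : R :=
  if (N <= 1)%N then 0%R else Rpower (lg N) a.

(* Main.v *)
Require Import Defs.
From mathcomp Require Import all_boot all_fingroup all_solvable.
From mathcomp Require Import zify.
Set Implicit Arguments. Unset Strict Implicit.

Section GroupPart.
Local Open Scope group_scope.


Section Pow.
Variables (gT : finGroupType) (G : {group gT}) (e : nat).
Hypothesis cGG : abelian G.
Lemma powM : {in G &, {morph (fun x : gT => x ^+ e) : x y / x * y}}.
Proof. move=> x y Gx Gy /=; apply: expgMn; exact: (centsP cGG). Qed.
Canonical powm := Morphism powM.
End Pow.

Lemma syl_pow (gT : finGroupType) (G P : {group gT}) p N (cGG : abelian G) :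
  prime p -> exponent G %| N -> (0 < N)%N -> P \in 'Syl_p(G) ->
  let E := (N %/ p ^ logn p N)%N in
  [/\ {in G, forall b, b ^+ E \in P},
      powm E cGG @* G = P &
      forall y, y \in P -> (#|[set b in G | b ^+ E == y]| * #|P|)%N = #|G| ].
Proof.
move=> pp /exponentP eN N0; rewrite inE => sylP E.
have [m cpm defN] := pfactor_coprime pp N0.
have pa0 : (0 < p ^ logn p N)%N by rewrite expn_gt0 prime_gt0.
have defE : E = m by rewrite /E {1}defN mulnK.
have sPG : P \subset G by exact: pHall_sub sylP.
have nPG : P <| G by rewrite -sub_abelian_normal.
have inP : {in G, forall b, b ^+ E \in P}.
  move=> b Gb; rewrite (mem_normal_Hall sylP nPG) ?groupX //.
  apply: (@pnat_dvd _ (p ^ logn p N)); last by rewrite pnatX pnat_id.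
  by rewrite order_dvdn -expgM defE -defN eN.
have imP : powm E cGG @* G = P.
  apply/eqP; rewrite eqEsubset; apply/andP; split.
    by apply/subsetP=> y /morphimP[b Gb _ ->]; exact: inP.
  apply/subsetP=> y Py.
  have cop : coprime #|P| E.
    have /p_natP[n ->] := pHall_pgroup sylP.
    by rewrite defE coprimeXl.
  have Gz : y ^+ expg_invn P E \in G by rewrite (subsetP sPG) ?groupX.
  apply/morphimP; exists (y ^+ expg_invn P E) => //=.
  by rewrite expgAC (expgK cop Py).
split => // y Py.
have : y \in powm E cGG @* G by rewrite imP.
case/morphimP=> z _ Gz ->.
have -> : #|[set b in G | b ^+ E == powm E cGG z]| = #|powm E cGG @*^-1 [set powm E cGG z]|.
  by apply: eq_card => b; rewrite !inE.
rewrite morphpre_set1 // card_rcoset -imP card_morphim setIid.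
apply: Lagrange; exact: subsetIl.
Qed.

Lemma gen_pow (gT : finGroupType) (G P : {group gT}) E (cGG : abelian G)
  (S : seq gT) : {subset S <= G} -> <<[set x in S]>> = G ->
  powm E cGG @* G = P ->
  <<[set x in [seq b ^+ E | b <- S]]>> = P.
Proof.
move=> sSG genS <-.
have sub : [set x in S] \subset G by apply/subsetP=> x; rewrite inE => /sSG.
have := morphim_gen (powm E cGG) sub; rewrite genS => ->.
rewrite morphimEsub //; congr <<_>>.
apply/setP=> y; rewrite inE; apply/idP/imsetP.
  by case/mapP=> b bS ->; exists b; rewrite ?inE.
by case=> b; rewrite inE => bS ->; apply/mapP; exists b.
Qed.

End GroupPart.

Section Run.
Variable gT : finGroupType.
Implicit Types (mem : seq gT).

Lemma run_cat mem p1 p2 : run mem (p1 ++ p2) = run (run mem p1) p2.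
Proof. by elim: p1 mem => //= c p IH mem; rewrite IH. Qed.

Lemma size_run mem p : size (run mem p) = size mem + size p.
Proof. by elim: p mem => [|c p IH] mem /=; rewrite ?addn0 // IH size_rcons addSnnS. Qed.

Lemma nth_run_old mem p i : i < size mem -> nth 1%g (run mem p) i = nth 1%g mem i.
Proof.
elim: p mem => //= c p IH mem Hi.
by rewrite IH ?size_rcons ?(ltnW (ltnS _ _)) ?nth_rcons ?Hi // ltnS ltnW.
Qed.

Lemma run_rcons mem p c : run mem (rcons p c) = rcons (run mem p) (exec (run mem p) c).
Proof. by rewrite -cats1 run_cat. Qed.

Lemma nth_run_last mem p c :
  nth 1%g (run mem (rcons p c)) (size mem + size p) = exec (run mem p) c.
Proof. by rewrite run_rcons nth_rcons size_run ltnn eqxx. Qed.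
End Run.

Fixpoint bitsf (f e : nat) : seq bool :=
  match f with
  | 0 => [::]
  | f'.+1 => if e == 0 then [::] else odd e :: bitsf f' e./2
  end.
Definition bits e := bitsf e e.
Fixpoint bval (bs : seq bool) : nat :=
  match bs with [::] => 0 | b :: bs' => b + (bval bs').*2 end.

Lemma bval_bitsf f e : e <= f -> bval (bitsf f e) = e.
Proof.
elim: f e => [|f IH] e /=; first by rewrite leqn0 => /eqP ->.
case: eqP => [-> //|/eqP e0 lef] /=.
rewrite IH ?odd_double_half //.
have h := odd_double_half e; rewrite -addnn in h.
case: (odd e) h => /= h; lia.
Qed.
Lemma bval_bits e : bval (bits e) = e.
Proof. exact: bval_bitsf. Qed.

Lemma size_bitsf f e k : e < 2 ^ k -> size (bitsf f e) <= k.
Proof.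
elim: f e k => [|f IH] e k //=.
case: eqP => // /eqP e0; case: k => [|k].
  by rewrite expn0 ltnS leqn0 (negbTE e0).
move=> lt; rewrite ltnS; apply: IH.
by rewrite ltn_half_double -mul2n -expnS.
Qed.
Lemma size_bits e : size (bits e) <= (trunc_log 2 e).+1.
Proof. apply: size_bitsf; exact: trunc_log_ltn. Qed.

Fixpoint pw (base r : nat) (bs : seq bool) : seq instr :=
  match bs with
  | [::] => [:: IOne]
  | b :: bs' =>
    let q := pw base r bs' in
    q ++ IMul (base + size q).-1 (base + size q).-1
      :: (if b then [:: IMul (base + size q) r] else [::])
  end.

Lemma size_pw base r bs : size (pw base r bs) <= (size bs).*2.+1.
Proof.
elim: bs => //= b bs IH; rewrite size_cat /=.
case: b => /=; rewrite -addnn; lia.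
Qed.

Lemma size_pw_gt0 base r bs : 0 < size (pw base r bs).
Proof. by case: bs => //= b bs; rewrite size_cat addnS. Qed.

Lemma size_pw_bits base r e : size (pw base r (bits e)) <= 2 * trunc_log 2 e + 3.
Proof.
apply: leq_trans (size_pw _ _ _) _; have := size_bits e; rewrite -addnn; lia.
Qed.

Lemma pw_ok (gT : finGroupType) (mem : seq gT) base r bs :
  size mem = base -> r < base ->
  nth 1%g (run mem (pw base r bs)) (base + size (pw base r bs)).-1
    = (nth 1%g mem r ^+ bval bs)%g.
Proof.
move=> sz rb; elim: bs => [|b bs IH] /=.
  by rewrite addn1 /= nth_rcons -sz ltnn eqxx expg0.
set q := pw base r bs in IH *.
have q0 : 0 < size q by exact: size_pw_gt0.
have Hq : (base + size q).-1 = base + size q - 1 by lia.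
have Ho : nth 1%g (run mem (rcons q (IMul (base + size q).-1 (base + size q).-1)))
      (base + size q) = (nth 1%g mem r ^+ (bval bs).*2)%g.
  by rewrite -sz nth_run_last /= sz IH -addnn expgD.
set c1 := IMul (base + size q).-1 (base + size q).-1 in Ho *.
case: b => /=.
  set c2 := IMul (base + size q) r.
  have -> : q ++ [:: c1; c2] = rcons (rcons q c1) c2 by rewrite -!cats1 -catA.
  rewrite !size_rcons (_ : (base + (size q).+2).-1 = size mem + size (rcons q c1)); last by rewrite size_rcons -sz; lia.
  rewrite nth_run_last /= Ho (@nth_run_old _ mem (rcons q c1) r); last by rewrite sz //.
  by rewrite addnC expgD expg1.
rewrite cats1 size_rcons.
by rewrite (_ : (base + (size q).+1).-1 = base + size q); [exact Ho| lia].
Qed.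

Definition MQ (N : nat) (Q : seq nat) := \prod_(p <- Q) p ^ logn p N.

Fixpoint tree (N d base r : nat) (Q : seq nat) : seq instr * seq nat :=
  match d with
  | 0 => ([::], nseq (size Q) r)
  | d'.+1 =>
    if size Q <= 1 then ([::], nseq (size Q) r) else
    let h := (size Q)./2 in
    let Q1 := take h Q in
    let Q2 := drop h Q in
    let p1 := pw base r (bits (MQ N Q2)) in
    let b1 := base + size p1 in
    let p2 := pw b1 r (bits (MQ N Q1)) in
    let b2 := b1 + size p2 in
    let t1 := tree N d' b2 b1.-1 Q1 in
    let t2 := tree N d' (b2 + size t1.1) b2.-1 Q2 in
    (p1 ++ p2 ++ t1.1 ++ t2.1, t1.2 ++ t2.2)
  end.

Lemma tree_ok (gT : finGroupType) N d Q base r (mem : seq gT) x e :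
  size mem = base -> r < base -> nth 1%g mem r = (x ^+ e)%g ->
  e * MQ N Q = N -> size Q <= 2 ^ d ->
  let t := tree N d base r Q in
  [/\ size t.2 = size Q, all (fun o => o < base + size t.1) t.2 &
  forall i, i < size Q -> exists e', nth 1%g (run mem t.1) (nth 0 t.2 i) = (x ^+ e')%g
       /\ e' * (nth 0 Q i) ^ (logn (nth 0 Q i) N) = N].
Proof.
have leaf : forall (mem : seq gT) base r e Q,
  size mem = base -> r < base -> nth 1%g mem r = (x ^+ e)%g ->
  e * MQ N Q = N -> size Q <= 1 ->
  [/\ size (nseq (size Q) r) = size Q, all (fun o => o < base + size ([::] : seq instr)) (nseq (size Q) r) &
  forall i, i < size Q -> exists e', nth 1%g (run mem [::]) (nth 0 (nseq (size Q) r) i) = (x ^+ e')%g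
       /\ e' * (nth 0 Q i) ^ (logn (nth 0 Q i) N) = N].
  move=> mem0 b0 r0 e0 Q0 sz rb Hr He; case: Q0 He => [|p [|q Q']] He HQ; try by split => // i.
  split; first by rewrite size_nseq.
    by apply/allP=> o; rewrite mem_nseq => /andP[_ /eqP ->]; rewrite addn0.
  case=> // _; exists e0; split => //.
  by rewrite /MQ big_seq1 in He.
elim: d Q base r mem e => [|d IH] Q base r mem e sz rb Hr He HQ.
  exact: (leaf mem base r e Q sz rb Hr He HQ).
rewrite /tree -/tree; case: ifP => [HQ1|HQ1]; first exact: (leaf mem base r e Q sz rb Hr He HQ1).
set h := (size Q)./2; set Q1 := take h Q; set Q2 := drop h Q.
set p1 := pw base r (bits (MQ N Q2)).
set b1 := base + size p1.
set p2 := pw b1 r (bits (MQ N Q1)).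
set b2 := b1 + size p2.
set t1 := tree N d b2 b1.-1 Q1.
set t2 := tree N d (b2 + size t1.1) b2.-1 Q2.
have hd := odd_double_half (size Q); rewrite -addnn -/h in hd.
have [hle hh'] : h <= size Q /\ size Q <= h + h + 1 by case: (odd (size Q)) hd => /= hd; lia.
have hh : h + h <= size Q by case: (odd (size Q)) hd => /= hd; lia.
have sQ1 : size Q1 = h by rewrite /Q1 size_take_min; lia.
have sQ2 : size Q2 = size Q - h by rewrite /Q2 size_drop.
rewrite expnS in HQ.
have HQ1' : size Q1 <= 2 ^ d by rewrite sQ1; lia.
have HQ2' : size Q2 <= 2 ^ d by rewrite sQ2; lia.
have hM : MQ N Q = MQ N Q1 * MQ N Q2 by rewrite /MQ -big_cat cat_take_drop.
have p10 : 0 < size p1 by exact: size_pw_gt0.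
have p20 : 0 < size p2 by exact: size_pw_gt0.
set mem1 := run mem p1.
have smem1 : size mem1 = b1 by rewrite /mem1 size_run sz.
have v1 : nth 1%g mem1 b1.-1 = (x ^+ (e * MQ N Q2))%g.
  by rewrite /mem1 /b1 /p1 pw_ok // bval_bits Hr expgM.
set mem2 := run mem1 p2.
have smem2 : size mem2 = b2 by rewrite /mem2 size_run smem1.
have v2 : nth 1%g mem2 b2.-1 = (x ^+ (e * MQ N Q1))%g.
  rewrite /mem2 /b2 /p2 pw_ok //; last by rewrite /b1; lia.
  by rewrite bval_bits /mem1 nth_run_old ?sz // Hr expgM.
have v1' : nth 1%g mem2 b1.-1 = (x ^+ (e * MQ N Q2))%g.
  by rewrite /mem2 nth_run_old ?smem1 //; rewrite /b1; lia.
have [IH1a IH1b IH1c] := IH Q1 b2 b1.-1 mem2 (e * MQ N Q2) smem2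
   ltac:(rewrite /b2; lia) v1' ltac:(rewrite -mulnA [_ * MQ N Q1]mulnC -hM //) HQ1'.
set mem3 := run mem2 t1.1.
have smem3 : size mem3 = b2 + size t1.1 by rewrite /mem3 size_run smem2.
have v2' : nth 1%g mem3 b2.-1 = (x ^+ (e * MQ N Q1))%g.
  by rewrite /mem3 nth_run_old ?smem2 //; rewrite /b2; lia.
have [IH2a IH2b IH2c] := IH Q2 (b2 + size t1.1) b2.-1 mem3 (e * MQ N Q1) smem3
   ltac:(rewrite /b2; lia) v2' ltac:(rewrite -mulnA -hM //) HQ2'.
have runE : run mem (p1 ++ p2 ++ t1.1 ++ t2.1) = run mem3 t2.1 by rewrite !run_cat.
rewrite runE; split.
- by rewrite size_cat IH1a IH2a sQ1 sQ2 subnKC.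
- rewrite all_cat; apply/andP; split.
    apply/allP=> o /(allP IH1b) H; rewrite !size_cat !addnA -/b1 -/b2; apply: (leq_trans H); exact: leq_addr.
  apply/allP=> o /(allP IH2b) H; rewrite !size_cat !addnA -/b1 -/b2; exact: H.
move=> i iQ; case: (ltnP i h) => ih.
  have [e' [He1 He2]] := IH1c i ltac:(by rewrite sQ1).
  exists e'; rewrite nth_cat IH1a sQ1 ih /mem3.
  rewrite nth_run_old; last first.
    rewrite size_run smem2; apply: (allP IH1b); apply: mem_nth; by rewrite IH1a sQ1.
  by rewrite He1 -(nth_take 0 ih).
have [e' [He1 He2]] := IH2c (i - h) ltac:(rewrite sQ2; lia).
exists e'; rewrite nth_cat IH1a sQ1 ltnNge ih /= He1.
split => //; have -> : nth 0 Q i = nth 0 Q2 (i - h) by rewrite /Q2 nth_drop subnKC.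
exact: He2.
Qed.

Lemma tl_mul a b : 0 < a -> 0 < b -> trunc_log 2 a + trunc_log 2 b <= trunc_log 2 (a * b).
Proof. by move=> a0 b0; apply: trunc_log_max => //; rewrite expnD leq_mul // trunc_logP. Qed.

Lemma MQ_gt0 N Q : all prime Q -> 0 < MQ N Q.
Proof.
rewrite /MQ; elim: Q => [|p Q IH] /=; first by rewrite big_nil.
by case/andP=> pp pQ; rewrite big_cons muln_gt0 expn_gt0 prime_gt0 // IH.
Qed.

Lemma tree_size N d base r Q : all prime Q ->
  size (tree N d base r Q).1 <= (2 * trunc_log 2 (MQ N Q) + 6 * size Q) * d.
Proof.
elim: d Q base r => [|d IH] Q base r pQ //=.
case: ifP => // HQ1 /=.
set h := (size Q)./2; set Q1 := take h Q; set Q2 := drop h Q.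
have pQ1 : all prime Q1 by move: pQ; rewrite -(cat_take_drop h Q) all_cat => /andP[].
have pQ2 : all prime Q2 by move: pQ; rewrite -(cat_take_drop h Q) all_cat => /andP[].
have hM : MQ N Q = MQ N Q1 * MQ N Q2 by rewrite /MQ -big_cat cat_take_drop.
have sQ : size Q = size Q1 + size Q2 by rewrite -size_cat cat_take_drop.
have tlM := tl_mul (MQ_gt0 N pQ1) (MQ_gt0 N pQ2); rewrite -hM in tlM.
rewrite !size_cat.
set A := size (pw _ _ _); set B := size (pw _ _ _).
have HA : A <= 2 * trunc_log 2 (MQ N Q2) + 3 by apply: size_pw_bits.
have HB : B <= 2 * trunc_log 2 (MQ N Q1) + 3 by apply: size_pw_bits.
set T1 := size (tree _ _ _ _ Q1).1; set T2 := size (tree _ _ _ _ Q2).1.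
have H1 : T1 <= (2 * trunc_log 2 (MQ N Q1) + 6 * size Q1) * d by apply: IH.
have H2 : T2 <= (2 * trunc_log 2 (MQ N Q2) + 6 * size Q2) * d by apply: IH.
have Q2' : 2 <= size Q by rewrite ltnNge HQ1.
rewrite sQ in Q2' *; nia.
Qed.

Lemma coprime_MQ N p Q : prime p -> all prime Q -> p \notin Q ->
  coprime (p ^ logn p N) (MQ N Q).
Proof.
move=> pp; rewrite /MQ; elim: Q => [|q Q IH] /=; first by rewrite big_nil coprimen1.
case/andP=> pq pQ; rewrite inE negb_or => /andP[npq nQ].
rewrite big_cons coprimeMr IH // andbT coprimeXl // coprimeXr //.
by rewrite prime_coprime // dvdn_prime2 // eq_sym.
Qed.

Lemma MQ_dvd N Q : 0 < N -> uniq Q -> all prime Q -> MQ N Q %| N.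
Proof.
move=> N0; elim: Q => [|p Q IH] /=; first by rewrite /MQ big_nil dvd1n.
case/andP=> npQ uQ /andP[pp pQ].
rewrite /MQ big_cons Gauss_dvd ?coprime_MQ // IH // andbT.
by rewrite pfactor_dvdn.
Qed.

Lemma MQ_ge N Q : 0 < N -> all prime Q -> all (fun p => p %| N) Q ->
  2 ^ size Q <= MQ N Q.
Proof.
move=> N0; elim: Q => [|p Q IH] /=; first by rewrite /MQ big_nil.
case/andP=> pp pQ /andP[pN dQ]; rewrite /MQ big_cons expnS leq_mul ?IH //.
have a1 : 1 <= logn p N by rewrite -pfactor_dvdn // expn1.
apply: leq_trans (prime_gt1 pp) _.
by rewrite -{1}(expn1 p) leq_pexp2l // prime_gt0.
Qed.

Definition block N ps base r :=
  let p0 := pw base r (bits (N %/ MQ N ps)) in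
  let t := tree N (trunc_log 2 (size ps)).+1 (base + size p0) (base + size p0).-1 ps in
  (p0 ++ t.1, t.2).

Lemma block_ok (gT : finGroupType) N ps base r (mem : seq gT) :
  size mem = base -> r < base -> 0 < N -> uniq ps -> all prime ps ->
  let b := block N ps base r in
  [/\ size b.2 = size ps, all (fun o => o < base + size b.1) b.2 &
  forall i, i < size ps -> nth 1%g (run mem b.1) (nth 0 b.2 i)
     = (nth 1%g mem r ^+ (N %/ (nth 0 ps i) ^ logn (nth 0 ps i) N))%g].
Proof.
move=> sz rb N0 uQ pQ /=.
set p0 := pw base r (bits (N %/ MQ N ps)).
set b0 := base + size p0.
have p00 : 0 < size p0 by exact: size_pw_gt0.
have smem : size (run mem p0) = b0 by rewrite size_run sz.
have v0 : nth 1%g (run mem p0) b0.-1 = (nth 1%g mem r ^+ (N %/ MQ N ps))%g.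
  by rewrite /b0 /p0 pw_ok // bval_bits.
have He : N %/ MQ N ps * MQ N ps = N by rewrite divnK // MQ_dvd.
have Hd : size ps <= 2 ^ (trunc_log 2 (size ps)).+1 by apply: ltnW; exact: trunc_log_ltn.
have rb0 : b0.-1 < b0 by rewrite /b0; lia.
have [Ha Hb Hc] := tree_ok (x := nth 1%g mem r) smem rb0 v0 He Hd.
split => //.
  apply/allP=> o /(allP Hb) H; rewrite size_cat addnA; exact: H.
move=> i ilt; have [e' [He1 He2]] := Hc i ilt.
rewrite run_cat He1; congr (_ ^+ _)%g.
have pi : prime (nth 0 ps i) by apply: (allP pQ); apply: mem_nth.
by rewrite -{1}He2 mulnK // expn_gt0 prime_gt0.
Qed.

Lemma block_size N ps base r : 0 < N -> uniq ps -> all prime ps -> all (fun p => p %| N) ps ->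
  ps != [::] -> size (block N ps base r).1 <= 13 * trunc_log 2 N * (trunc_log 2 (size ps)).+1.
Proof.
move=> N0 uQ pQ dQ nQ.
rewrite /block /= size_cat.
have := size_pw_bits base r (N %/ MQ N ps).
have := tree_size N (trunc_log 2 (size ps)).+1
   (base + size (pw base r (bits (N %/ MQ N ps)))) (base + size (pw base r (bits (N %/ MQ N ps)))).-1 pQ.
set A := size (pw _ _ _); set T := size _.
have M0 := MQ_gt0 N pQ.
have dv := MQ_dvd N0 uQ pQ.
have He : N %/ MQ N ps * MQ N ps = N by rewrite divnK.
have q0 : 0 < N %/ MQ N ps by rewrite divn_gt0 // dvdn_leq.
have tl1 := tl_mul q0 M0; rewrite He in tl1.
have kM : size ps <= trunc_log 2 (MQ N ps) by apply: trunc_log_max => //; exact: MQ_ge.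
have T1 : 1 <= trunc_log 2 N.
  apply: trunc_log_max => //; case: ps nQ pQ dQ {uQ dv He q0 tl1 kM M0 A T} => // p ps _ /andP[pp _] /andP[pN _].
  by rewrite expn1; apply: leq_trans (prime_gt1 pp) (dvdn_leq N0 pN).
move=> H1 H2.
set TN := trunc_log 2 N in tl1 T1 *; set c := (trunc_log 2 (size ps)).+1 in H1 *.
have c1 : 1 <= c by [].
have Hlin : 2 * trunc_log 2 (MQ N ps) + 6 * size ps <= 8 * TN by lia.
have H3 : T <= (8 * TN) * c by apply: (leq_trans H1); exact: (leq_mul Hlin (leqnn c)).
have H4 : A <= (5 * TN) * c by apply: (leq_trans H2); apply: leq_trans (leq_pmulr _ c1); lia.
have -> : 13 * TN * c = 5 * TN * c + 8 * TN * c by rewrite -mulnDl -mulnDl.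
exact: leq_add.
Qed.

Arguments block : simpl never.

Fixpoint blocks N ps base (rs : seq nat) : seq instr * seq (seq nat) :=
  match rs with
  | [::] => ([::], [::])
  | r :: rs' =>
    let b := block N ps base r in
    let t := blocks N ps (base + size b.1) rs' in
    (b.1 ++ t.1, b.2 :: t.2)
  end.

Lemma blocks_ok (gT : finGroupType) N ps rs base (mem : seq gT) :
  size mem = base -> all (fun r => r < base) rs -> 0 < N -> uniq ps -> all prime ps ->
  let t := blocks N ps base rs in
  size t.2 = size rs /\
  forall j i, j < size rs -> i < size ps ->
    nth 1%g (run mem t.1) (nth 0 (nth [::] t.2 j) i)
     = (nth 1%g mem (nth 0 rs j) ^+ (N %/ (nth 0 ps i) ^ logn (nth 0 ps i) N))%g.
Proof.
move=> + + N0 uQ pQ; elim: rs base mem => [|r rs IH] base mem sz //= /andP[rb rsb].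
have [Ha Hb Hc] := block_ok sz rb N0 uQ pQ.
set b := block N ps base r in Ha Hb Hc *.
have sz' : size (run mem b.1) = base + size b.1 by rewrite size_run sz.
have rsb' : all (fun r => r < base + size b.1) rs.
  by apply/allP=> o /(allP rsb) H; apply: leq_trans H (leq_addr _ _).
have [IHa IHb] := IH _ _ sz' rsb'.
split; first by rewrite IHa.
move=> [|j] i jlt ilt /=; rewrite run_cat.
  have o_lt : nth 0 b.2 i < size (run mem b.1).
    by rewrite sz'; apply: (allP Hb); apply: mem_nth; rewrite Ha.
  by rewrite nth_run_old // Hc.
rewrite IHb // nth_run_old // sz; apply: (allP rsb); exact: mem_nth.
Qed.

Lemma blocks_size N ps base rs B :
  (forall base r, size (block N ps base r).1 <= B) ->
  size (blocks N ps base rs).1 <= size rs * B.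
Proof.
move=> HB; elim: rs base => [|r rs IH] base //=.
rewrite size_cat mulSn; apply: leq_add; [exact: HB | exact: IH].
Qed.

Lemma size_ps_tl N ps : 0 < N -> uniq ps -> all prime ps -> all (fun p => p %| N) ps ->
  size ps <= trunc_log 2 N.
Proof.
move=> N0 uQ pQ dQ; apply: trunc_log_max => //.
apply: leq_trans (MQ_ge N0 pQ dQ) _; apply: dvdn_leq => //; exact: MQ_dvd.
Qed.

Lemma N_ge2 N ps : 0 < N -> all prime ps -> all (fun p => p %| N) ps -> ps != [::] -> 1 < N.
Proof.
case: ps => // p ps N0 /andP[pp _] /andP[pN _] _.
apply: leq_trans (prime_gt1 pp) (dvdn_leq N0 pN).
Qed.

Lemma tree_size2 N d base r Q : size (tree N d base r Q).2 = size Q.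
Proof.
elim: d Q base r => [|d IH] Q base r /=; first by rewrite size_nseq.
case: ifP => _ /=; first by rewrite size_nseq.
by rewrite size_cat !IH -size_cat cat_take_drop.
Qed.

Lemma block_size2 N ps base r : size (block N ps base r).2 = size ps.
Proof. exact: tree_size2. Qed.

Lemma blocks_size2 N ps base rs : size (blocks N ps base rs).2 = size rs.
Proof. by elim: rs base => [|r rs IH] base //=; rewrite IH. Qed.

From Stdlib Require Import Reals Lra.
Unset Implicit Arguments.

Lemma INR_exp2 t : INR (expn 2 t) = (2 ^ t)%R.
Proof. elim: t => [//|t IH]; rewrite expnS mulnE mult_INR IH /=; lra. Qed.

Lemma INR_leq a b : a <= b -> (INR a <= INR b)%R.
Proof. by move/leP; apply: le_INR. Qed.
Arguments INR_leq {a b}.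

Lemma logb t X : (0 < X)%R -> (2 ^ t <= X)%R -> (INR t * ln 2 <= ln X)%R.
Proof.
move=> X0 H; rewrite -ln_pow; last lra.
have : (0 < 2 ^ t)%R by apply: pow_lt; lra.
move=> p0; destruct (Rle_lt_or_eq_dec _ _ H) as [Hl|He].
  by left; apply: ln_increasing.
by rewrite He; right.
Qed.

Lemma real_bound eps (T c N : nat) : (0 < eps)%R -> 2 <= N -> expn 2 T <= N -> expn 2 c <= T ->
  (INR (13 * T * c.+1) <= 13 * (1 / (eps * ln 2) + 1) * lg_pow N (1 + eps))%R.
Proof.
move=> e0 N2 HT Hc.
have ln2 : (0 < ln 2)%R by have := ln_lt_2; lra.
have N2r : (2 <= INR N)%R by have := INR_leq N2; have -> : INR 2 = 2%R by simpl; lra.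
have lnN : (ln 2 <= ln (INR N))%R.
  destruct (Rle_lt_or_eq_dec _ _ N2r) as [Hl|He]; first by left; apply: ln_increasing; lra.
  by rewrite -He; right.
set L := lg N.
have L1 : (1 <= L)%R.
  rewrite /L /lg; apply: (Rmult_le_reg_r (ln 2)) => //.
  rewrite Rmult_1_l /Rdiv Rmult_assoc Rinv_l; lra.
have TL : (INR T <= L)%R.
  have := logb T (INR N) ltac:(lra) ltac:(rewrite -INR_exp2; exact: INR_leq).
  move=> H; rewrite /L /lg; apply: (Rmult_le_reg_r (ln 2)) => //.
  rewrite /Rdiv Rmult_assoc Rinv_l; lra.
have cL : (INR c * ln 2 <= ln L)%R.
  apply: logb; first lra.
  apply: Rle_trans TL; rewrite -INR_exp2; exact: INR_leq.
have -> : lg_pow N (1 + eps) = (L * Rpower L eps)%R.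
  rewrite /lg_pow; case: ifP => [N1|_]; first by move: N1; rewrite leqNgt (leq_trans _ N2).
  by rewrite -/L Rpower_plus Rpower_1 //; lra.
set R := Rpower L eps.
have R1 : (eps * ln L <= R - 1)%R.
  rewrite /R /Rpower; have := exp_ineq1_le (eps * ln L); lra.
have lnL0 : (0 <= ln L)%R.
  destruct (Rle_lt_or_eq_dec _ _ L1) as [Hl|He]; last by rewrite -He ln_1; lra.
  by left; rewrite -ln_1; apply: ln_increasing; lra.
have Rg1 : (1 <= R)%R by have := Rmult_le_pos _ _ (Rlt_le _ _ e0) lnL0; lra.
have cR : (INR c <= R / (eps * ln 2))%R.
  apply: (Rmult_le_reg_r (eps * ln 2)); first by apply: Rmult_lt_0_compat.
  rewrite /Rdiv Rmult_assoc Rinv_l; last by apply: Rgt_not_eq; apply: Rmult_lt_0_compat.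
  have := Rmult_le_compat_l eps _ _ (Rlt_le _ _ e0) cL; nra.
have T0 : (0 <= INR T)%R by apply: pos_INR.
have c0 : (0 <= INR c)%R by apply: pos_INR.
rewrite !mulnE !mult_INR (S_INR c).
have K : (INR c + 1 <= (1 / (eps * ln 2) + 1) * R)%R.
  have : (R / (eps * ln 2) = 1 / (eps * ln 2) * R)%R by rewrite /Rdiv; ring.
  have : (0 < 1 / (eps * ln 2))%R.
    by apply: Rdiv_lt_0_compat; [lra | apply: Rmult_lt_0_compat].
  nra.
have : (INR 13 = 13)%R by rewrite /=; lra.
move=> ->.
have : (0 <= INR c + 1)%R by lra.
nra.
Qed.

Unset Implicit Arguments.
Theorem lemma7 :
  forall eps : R, (0 < eps)%R ->
  exists C : R,
  forall (N : nat) (ps : seq nat),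
    (0 < N)%N -> uniq ps -> all prime ps -> all (fun p => p %| N) ps ->
  (* (i) *)
  (forall m : nat,
     exists (prog : seq instr) (outs : seq (seq nat)),
       (INR (size prog) <= C * INR m * lg_pow N (1 + eps))%R /\
       size outs = size ps /\ all (fun o => size o == m) outs /\
       forall (gT : finGroupType) (G : {group gT}),
         abelian G -> exponent G %| N ->
         forall S : seq gT, size S = m -> {subset S <= G} ->
           <<[set x in S]>>%g = G ->
           forall i, (i < size ps)%N ->
           forall P : {group gT}, (P \in 'Syl_(nth 0%N ps i)(G))%g ->
             <<[set x in slp_out prog S (nth [::] outs i)]>>%g = P)
  /\
  (* (ii) *)
  (exists (prog : seq instr) (outs : seq nat),
     (INR (size prog) <= C * lg_pow N (1 + eps))%R /\
     size outs = size ps /\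
     forall (gT : finGroupType) (G : {group gT}),
       abelian G -> exponent G %| N ->
       forall i, (i < size ps)%N ->
       forall P : {group gT}, (P \in 'Syl_(nth 0%N ps i)(G))%g ->
         let f := fun b : gT => nth 1%g (slp_out prog [:: b] outs) i in
         (forall b, b \in G -> f b \in P) /\
         (forall y, y \in P -> (#|[set b in G | f b == y]| * #|P|)%N = #|G|)).

Proof.
move=> eps e0.
have ln2 : (0 < ln 2)%R by have := ln_lt_2; lra.
exists (13 * (1 / (eps * ln 2) + 1))%R.
move=> N ps N0 uQ pQ dQ.
have C0 : (0 <= 13 * (1 / (eps * ln 2) + 1))%R.
  have : (0 < 1 / (eps * ln 2))%R by apply: Rdiv_lt_0_compat; [lra | apply: Rmult_lt_0_compat].
  lra.
have lgp0 : (0 <= lg_pow N (1 + eps))%R.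
  rewrite /lg_pow; case: ifP => _; first lra.
  rewrite /Rpower; left; exact: exp_pos.
case: (eqVneq ps [::]) => [-> | nQ].
  split.
    move=> m; exists [::], [::]; split; last by [].
    rewrite /=; apply: Rmult_le_pos => //; apply: Rmult_le_pos => //; exact: pos_INR.
  exists [::], [::]; split; last by [].
  rewrite /=; apply: Rmult_le_pos => //.
have N2 := N_ge2 N0 pQ dQ nQ.
have k0 : (0 < size ps)%N by case: ps nQ {uQ pQ dQ N2}.
have HT := trunc_logP (isT : (1 < 2)%N) N0.
have Hc : (expn 2 (trunc_log 2 (size ps)) <= trunc_log 2 N)%N.
  apply: leq_trans (trunc_logP (isT : (1 < 2)%N) k0) _; exact: size_ps_tl.
have Bnd := real_bound eps _ _ N e0 N2 HT Hc.
set K := (13 * trunc_log 2 N * (trunc_log 2 (size ps)).+1)%N in Bnd.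
have HB : forall base r, (size (block N ps base r).1 <= K)%N.
  by move=> base r; apply: block_size.
split.
  move=> m; set bl := blocks N ps m (iota 0 m).
  exists bl.1, [seq [seq nth 0 o i | o <- bl.2] | i <- iota 0 (size ps)].
  split; [|split; [|split]].
  - have Hs : (size bl.1 <= m * K)%N by have := blocks_size m (iota 0 m) HB; rewrite size_iota.
    apply: Rle_trans (INR_leq Hs) _.
    rewrite mulnE mult_INR.
    have H := Rmult_le_compat_l (INR m) _ _ (pos_INR m) Bnd.
    apply: Rle_trans H _; right; ring.
  - by rewrite size_map size_iota.
  - by apply/allP=> o /mapP[i _ ->]; rewrite size_map blocks_size2 size_iota.
  move=> gT G cG eN S sz sSG genS i ilt P sylP.
  have Sb : all (fun r => (r < m)%N) (iota 0 m) by apply/allP=> j; rewrite mem_iota.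
  have [_ Hv] := @blocks_ok gT N ps (iota 0 m) m S sz Sb N0 uQ pQ.
  have pp : prime (nth 0 ps i) by apply: (allP pQ); exact: mem_nth.
  have [_ imP _] := syl_pow cG pp eN N0 sylP.
  suff -> : slp_out bl.1 S (nth [::] [seq [seq nth 0 o i | o <- bl.2] | i <- iota 0 (size ps)] i)
     = [seq (b ^+ (N %/ expn (nth 0 ps i) (logn (nth 0 ps i) N)))%g | b <- S] by exact: gen_pow sSG genS imP.
  rewrite /slp_out (nth_map 0) ?size_iota // nth_iota // add0n -map_comp.
  apply: (@eq_from_nth _ 1%g); first by rewrite !size_map blocks_size2 size_iota sz.
  move=> j; rewrite size_map blocks_size2 size_iota => jm.
  rewrite (nth_map [::]) ?blocks_size2 ?size_iota // (nth_map 1%g) ?sz //=.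
  by rewrite Hv ?size_iota // nth_iota.
set bl := block N ps 1 0.
exists bl.1, bl.2; split; [|split].
- apply: Rle_trans (INR_leq (HB 1%N 0%N)) _; exact: Bnd.
- exact: block_size2.
move=> gT G cG eN i ilt P sylP f.
have pp : prime (nth 0 ps i) by apply: (allP pQ); exact: mem_nth.
have fE : forall b, f b = (b ^+ (N %/ expn (nth 0 ps i) (logn (nth 0 ps i) N)))%g.
  move=> b; rewrite /f /slp_out (nth_map 0) ?block_size2 //.
  have [_ _ Hc'] := @block_ok gT N ps 1 0 [:: b] erefl isT N0 uQ pQ.
  by rewrite Hc'.
have [inP _ fib] := syl_pow cG pp eN N0 sylP.
split; first by move=> b Gb; rewrite fE; exact: inP.
move=> y Py; rewrite -(fib y Py); congr (_ * _)%N.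
by apply: eq_card => b; rewrite !inE fE.
Qed.
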